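(* Define, for integers $n,m,p\ge0$, $\mathcal{Z}_{n,m}(p)=\binom{m+p}{p}\sum_{k=0}^{m}s(m,k)\mathcal{B}_{n+k,p}$ and the polynomials $$\mathcal{Z}_{n,m}(x;p)=\sum_{k=0}^{n}\binom{n}{k}\mathcal{Z}_{k,m}(p)\,x^{n-k}.$$ Then for all integers $n,m,p\ge0$, $$\mathcal{Z}_{n+1,m}(x;p)=\frac{m+1}{m+p+1}\,\mathcal{Z}_{n,m+1}(x;p)+(m+x)\,\mathcal{Z}_{n,m}(x;p),$$ with $\mathcal{Z}_{0,m}(x;p)=1$.
   Context: $s(m,k)$ are the signed Stirling numbers of the first kind, defined by $x(x-1)\cdots(x-m+1)=\sum_{k=0}^m s(m,k)x^k$. For an integer $p\ge0$, the $p$-Bell numbers $\mathcal{B}_{n,p}$ are defined by $\sum_{n\ge0}\mathcal{B}_{n,p}\frac{z^n}{n!}=\sum_{n\ge0}\binom{n+p}{p}^{-1}\frac{(e^z-1)^n}{n!}$. *)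

(* Defs.v *)
From HB Require Import structures.
From mathcomp Require Import all_boot all_order all_algebra.
Set Implicit Arguments. Unset Strict Implicit. Unset Printing Implicit Defensive.
Import Order.TTheory GRing.Theory Num.Theory.
Local Open Scope ring_scope.

Definition stirling1 (m k : nat) : rat :=
  (\prod_(i < m) ('X - (i%:R)%:P) : {poly rat})`_k.

Definition expTrunc (N : nat) : {poly rat} :=
  \poly_(j < N.+1) (j`!%:R)^-1.

(* p-Bell numbers: B_{N,p} = N! [z^N] sum_{n>=0} C(n+p,p)^{-1} (e^z-1)^n / n!.
   Since e^z - 1 has zero constant term, only n <= N contribute to [z^N],
   and only the terms of e^z of degree <= N matter, so the coefficient
   extraction is done exactly on the truncated polynomial. *)
Definition pBell (N p : nat) : rat :=
  N`!%:R *
  (\sum_(n < N.+1)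
     ((('C(n + p, p))%:R)^-1 * (n`!%:R)^-1) *: (expTrunc N - 1) ^+ n)`_N.

Definition Zp (n m p : nat) : rat :=
  ('C(m + p, p))%:R * \sum_(k < m.+1) stirling1 m k * pBell (n + k) p.

Definition Zpoly (n m p : nat) : {poly rat} :=
  \sum_(k < n.+1) ((('C(n, k))%:R * Zp k m p) *: 'X^(n - k)).

(* Main.v *)
Require Import Defs.
From HB Require Import structures.
From mathcomp Require Import all_boot all_order all_algebra.
From mathcomp Require Import ring zify.
Import Order.TTheory GRing.Theory Num.Theory.
Local Open Scope ring_scope.

Definition fT (j : nat) : {poly rat} := expTrunc j - 1.
Definition TT (j n : nat) : rat := j`!%:R / n`!%:R * ((fT j)^+n)`_j.

Lemma agree_mul (j : nat) (A B C D : {poly rat}) :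
  (forall i, (i <= j)%N -> A`_i = B`_i) -> (forall i, (i <= j)%N -> C`_i = D`_i) ->
  forall i, (i <= j)%N -> (A*C)`_i = (B*D)`_i.
Proof.
move=> hAB hCD i hi; rewrite !coefM; apply: eq_bigr => k _.
have hk : (k <= i)%N by rewrite -ltnS ltn_ord.
rewrite hAB ?hCD //; first exact: leq_trans (leq_subr k i) hi.
exact: leq_trans hk hi.
Qed.

Lemma agree_exp (j n : nat) (A B : {poly rat}) :
  (forall i, (i <= j)%N -> A`_i = B`_i) ->
  forall i, (i <= j)%N -> (A^+n)`_i = (B^+n)`_i.
Proof.
move=> h; elim: n => [|n IH] i hi; first by rewrite !expr0.
by rewrite !exprS; exact: (@agree_mul j _ _ _ _ h IH i hi).
Qed.

Lemma fT_agree j i : (i <= j)%N -> (fT j.+1)`_i = (fT j)`_i.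
Proof.
move=> hi; rewrite /fT /expTrunc !coefB !coef_poly.
by rewrite ltnS (leq_trans hi (leqnSn j)) ltnS hi.
Qed.

Lemma fact_neq0 k : (k`!%:R : rat) != 0.
Proof. by rewrite pnatr_eq0 -lt0n fact_gt0. Qed.

Lemma deriv_agree j i : (i <= j)%N -> (fT j.+1)^`()`_i = (fT j + 1)`_i.
Proof.
move=> hi; rewrite coef_deriv /fT subrK /expTrunc coefB !coef_poly coefC /=.
rewrite !ltnS hi subr0 -mulr_natr factS natrM; have h1 := fact_neq0 i.
have h2 : (1 + i%:R : rat) != 0 by rewrite addrC natr1 pnatr_eq0.
by field; rewrite h1 h2.
Qed.

Lemma TT0n n : TT 0 n = (n == 0%N)%:R.
Proof.
rewrite /TT /fT /expTrunc.
have -> : \poly_(j < 1) ((j`!)%:R)^-1 = 1 :> {poly rat}.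
  apply/polyP => i; rewrite coef_poly coefC; case: i => //=.
rewrite subrr; case: n => [|n] /=; first by rewrite expr0 coefC /= mulr1 (divff (fact_neq0 0)).
by rewrite expr0n /= coefC /= mulr0.
Qed.

Lemma TTS0 j : TT j.+1 0 = 0.
Proof. by rewrite /TT expr0 coefC /= mulr0. Qed.

Lemma TTSS j n : TT j.+1 n.+1 = n.+1%:R * TT j n.+1 + TT j n.
Proof.
rewrite /TT.
have hc : ((fT j.+1)^+n.+1)`_j.+1 = ((fT j.+1 ^+ n.+1)^`()`_j) / j.+1%:R.
  by rewrite coef_deriv -[_ *+ j.+1]mulr_natr mulfK // pnatr_eq0.
rewrite hc deriv_exp /= -mulr_natr coefMn.
have ha : forall i, (i <= j)%N -> (fT j.+1 ^+ n)`_i = (fT j ^+ n)`_i.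
  by apply: agree_exp => i hi; apply: fT_agree.
rewrite (@agree_mul j _ (fT j + 1) _ (fT j ^+ n) (deriv_agree j) ha j (leqnn j)).
rewrite mulrDl mul1r -exprS coefD.
rewrite !factS !natrM.
have h1 := fact_neq0 j; have h2 := fact_neq0 n.
have h3 : (1 + j%:R : rat) != 0 by rewrite addrC natr1 pnatr_eq0.
have h4 : (1 + n%:R : rat) != 0 by rewrite addrC natr1 pnatr_eq0.
rewrite mul1r -[_ *+ n.+1]mulr_natr.
by field; rewrite ?h1 ?h2 ?h3 ?h4.
Qed.

Fixpoint SS (j m n : nat) : rat :=
  match j with
  | 0 => (n == m)%:R
  | j'.+1 => (if n is n'.+1 then SS j' m n' else 0) + n%:R * SS j' m n
  end.

Lemma TT_SS j n : TT j n = SS j 0 n.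
Proof.
elim: j n => [|j IH] n; first by rewrite TT0n.
case: n => [|n]; first by rewrite TTS0 /= mul0r addr0.
by rewrite TTSS /= !IH addrC.
Qed.

Lemma SS_S j m n : SS j.+1 m n.+1 = SS j m n + n.+1%:R * SS j m n.+1.
Proof. by []. Qed.

Lemma SS_shift j m n : SS j m.+1 n = SS j.+1 m n - m%:R * SS j m n.
Proof.
elim: j n => [|j IH] n.
  case: n => [|n] /=.
    by case: m => [|m] /=; rewrite ?mul0r ?mulr0 ?subr0 ?add0r ?addr0 ?subr0.
  have [<-|hne] := eqVneq n.+1 m.
    by rewrite /= !ltn_eqF // mulr1 add0r subrr.
  by rewrite /= !mulr0 subr0 addr0.
case: n => [|n].
  by rewrite /= !mul0r !add0r mulr0 ?subr0.
rewrite [SS j.+1 m.+1 _]SS_S !IH [SS j.+2 m _]SS_S [SS j.+1 m n.+1]SS_S; ring.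
Qed.

Lemma SS_supp j m n : (j + m < n)%N -> SS j m n = 0.
Proof.
elim: j n => [|j IH] n /=.
  by move=> h; rewrite add0n in h; rewrite gtn_eqF.
move=> h; rewrite IH ?mulr0 ?addr0; last by lia.
case: n h => [|n] // h; apply: IH; lia.
Qed.

Definition cc (p n : nat) : rat := ('C(n + p, p)%:R)^-1.

Lemma pBell_eq j p : pBell j p = \sum_(n < j.+1) cc p n * SS j 0 n.
Proof.
rewrite /pBell coef_sum mulr_sumr; apply: eq_bigr => n _.
rewrite coefZ -TT_SS /TT /cc -/(fT j); ring.
Qed.

Lemma sum_ext (F : nat -> rat) a b : (a <= b)%N ->
  (forall n, (a <= n < b)%N -> F n = 0) ->
  \sum_(n < a) F n = \sum_(n < b) F n.
Proof.
move=> hab hz; rewrite -!(big_mkord xpredT) (big_cat_nat (leq0n a) hab) /=.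
rewrite [X in _ + X]big1_seq ?addr0 // => i /andP [_]; rewrite mem_index_iota.
exact: hz.
Qed.

Definition ff (m : nat) : {poly rat} := \prod_(i < m) ('X - (i%:R)%:P).

Lemma size_ff m : size (ff m) = m.+1.
Proof. by rewrite /ff size_prod_XsubC [index_enum _]unlock -enumT -cardT card_ord. Qed.

Lemma stir_big m k : (m < k)%N -> stirling1 m k = 0.
Proof. by move=> h; rewrite /stirling1 -/(ff m) nth_default // size_ff. Qed.

Lemma stir_S m k : stirling1 m.+1 k =
  (if k is k'.+1 then stirling1 m k' else 0) - m%:R * stirling1 m k.
Proof.
rewrite /stirling1 big_ord_recr /= -/(ff m) mulrBr coefB coefMX coefMC.
by case: k => [|k] /=; rewrite mulrC.
Qed.

Definition W (p j m : nat) : rat := \sum_(k < m.+1) stirling1 m k * pBell (j + k) p.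

Lemma W_rec p j m : W p j m.+1 = W p j.+1 m - m%:R * W p j m.
Proof.
rewrite /W.
under eq_bigr do rewrite stir_S mulrBl.
rewrite sumrB big_ord_recl /= mul0r add0r.
rewrite [X in _ - X]big_ord_recr /= (@stir_big m m.+1 (ltnSn m)) mulr0 mul0r addr0 mulr_sumr.
congr (_ - _).
  by apply: eq_bigr => i _; rewrite add0n /bump /= add1n addnS addSn.
by apply: eq_bigr => i _; rewrite mulrA.
Qed.

Definition Vb (N p j m : nat) : rat := \sum_(n < N) cc p n * SS j m n.

Lemma W_V p m : forall j N, (j + m < N)%N -> W p j m = Vb N p j m.
Proof.
elim: m => [|m IH] j N h.
  rewrite /W big_ord_recl big_ord0 addr0 /stirling1 big_ord0 coefC /= mul1r addn0.
  rewrite pBell_eq /Vb; apply: (@sum_ext (fun n => cc p n * SS j 0 n)); first by rewrite addn0 in h.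
  by move=> n /andP [h1 _]; rewrite SS_supp ?mulr0 // addn0.
rewrite W_rec (IH j.+1 N) ?(IH j N); [|lia|lia].
rewrite /Vb mulr_sumr -sumrB; apply: eq_bigr => n _.
rewrite SS_shift; ring.
Qed.

Lemma W0 p m : W p 0 m = cc p m.
Proof.
rewrite (@W_V p m 0 m.+1) // /Vb big_ord_recr /= eqxx mulr1 big1 ?add0r // => i _.
by rewrite ltn_eqF ?mulr0.
Qed.

Lemma Zp0 m p : Defs.Zp 0 m p = 1.
Proof.
rewrite /Defs.Zp -/(W p 0 m) W0 /cc addnC divff // pnatr_eq0 -lt0n bin_gt0.
by rewrite leq_addr.
Qed.

Definition P (p n m : nat) : {poly rat} :=
  \sum_(k < n.+1) ((('C(n, k))%:R * W p k m) *: 'X^(n - k)).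

Lemma Zpoly_P n m p : Zpoly n m p = ('C(m + p, p))%:R *: P p n m.
Proof.
rewrite /Zpoly /P scaler_sumr; apply: eq_bigr => k _.
by rewrite scalerA /Defs.Zp -/(W p k m) mulrCA.
Qed.

Lemma W_rec' p k m : W p k.+1 m = W p k m.+1 + m%:R * W p k m.
Proof. by rewrite W_rec subrK. Qed.

Opaque W.

Lemma XP p n m :
  (('C(n.+1, 0))%:R * W p 0 m) *: 'X^(n.+1 - 0) +
  \sum_(k < n.+1) ((('C(n, k.+1))%:R * W p k.+1 m) *: 'X^(n - k))
  = 'X * P p n m.
Proof.
rewrite /P [in RHS]big_ord_recl [X in _ + X = _]big_ord_recr /= mulrDr (mulr_sumr _ _ _ 'X).
rewrite (bin_small (ltnSn n)) mul0r scale0r addr0.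
rewrite !bin0 !subn0 -scalerAr -exprS; congr (_ + _).
apply: eq_bigr => i _.
rewrite -scalerAr -exprS /bump /= add1n subnSK //.
Qed.

Lemma P_rec p n m : P p n.+1 m = P p n m.+1 + ('X + (m%:R)%:P) * P p n m.
Proof.
rewrite {1}/P big_ord_recl /=.
have e : forall k : 'I_n.+1,
   (('C(n.+1, bump 0 k))%:R * W p (bump 0 k) m) *: 'X^(n.+1 - bump 0 k) =
   (('C(n, k.+1))%:R * W p k.+1 m) *: 'X^(n - k)
   + (('C(n, k))%:R * W p k m.+1) *: 'X^(n - k)
   + (m%:R)%:P * ((('C(n, k))%:R * W p k m) *: 'X^(n - k)).
  move=> k; rewrite /bump /= add1n binS subSS natrD mulrDl scalerDl W_rec'.
  rewrite mul_polyC scalerA -addrA; congr (_ + _).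
  by rewrite mulrDr scalerDl; congr (_ + _); rewrite mulrCA.
rewrite (eq_bigr _ (fun k _ => e k)) !big_split /= !addrA XP.
rewrite -(mulr_sumr _ _ _ (m%:R)%:P) -/(P p n m.+1) -/(P p n m) mulrDl.
by rewrite [_ * P p n m + P p n m.+1]addrC !addrA.
Qed.

Theorem mainTheorem14 (n m p : nat) :
  Zpoly n.+1 m p =
    (((m.+1)%:R / ((m + p).+1)%:R : rat) *: Zpoly n m.+1 p)
    + ('X + (m%:R)%:P) * Zpoly n m p
  /\ Zpoly 0 m p = 1.
Proof.
split; last first.
  by rewrite /Zpoly big_ord1 /= Zp0 mul1r scale1r expr0.
rewrite !Zpoly_P P_rec scalerDr scalerA scalerAr; congr (_ + _).
congr (_ *: _).
have hb : ('C(m.+1 + p, p) * m.+1 = 'C(m + p, p) * (m + p).+1)%N.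
  have := mul_bin_diag (m.+1 + p) m.
  have e1 : 'C(m + p, m) = 'C(m + p, p) by rewrite -[X in 'C(_, X)](addnK p m) bin_sub ?leq_addl.
  have e2 : 'C(m.+1 + p, m.+1) = 'C(m.+1 + p, p) by rewrite -[X in 'C(_, X)](addnK p m.+1) bin_sub ?leq_addl.
  rewrite -e2 -e1 addSn /=; lia.
have hn : (((m + p).+1)%:R : rat) != 0 by rewrite pnatr_eq0.
apply: (mulIf hn); rewrite mulrAC divfK // -!natrM -hb natrM mulrC.
by rewrite natrM.
Qed.
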